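(* A morphism in $\mathbf{MetCH_{sep}}$ is an epimorphism if and only if it is surjective.
   Context: A metric on a set $X$ is a map $d\colon X\times X\to[0,\infty]$ with $d(x,x)=0$ and $d(x,z)\le d(x,y)+d(y,z)$ (not necessarily symmetric, $\infty$ allowed); separated means $d(x,y)=0=d(y,x)$ implies $x=y$. A separated metric compact Hausdorff space is a compact Hausdorff space with a separated metric $d\colon X\times X\to[0,\infty]$ continuous with respect to the upper topology on $[0,\infty]$ (open sets $]u,\infty]$, plus $\emptyset$ and $[0,\infty]$). $\mathbf{MetCH_{sep}}$ has these spaces as objects and continuous non-expansive maps ($d_Y(f(x),f(y))\le d_X(x,y)$) as morphisms. *)

(* Defs.v *)
From HB Require Import structures.
From mathcomp Require Import all_boot all_order all_algebra.
From mathcomp Require Import all_classical all_reals all_analysis.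
From mathcomp Require Import Rstruct Rstruct_topology.

Set Implicit Arguments.
Unset Strict Implicit.
Unset Printing Implicit Defensive.

Import Order.TTheory GRing.Theory Num.Theory.
Local Open Scope classical_set_scope.
Local Open Scope ereal_scope.

(* Values in [0, +oo] are modelled as nonnegative extended reals. *)
Definition ExtR := \bar (Rdefinitions.R).

Definition is_metric (X : Type) (d : X -> X -> ExtR) : Prop :=
  (forall x y, 0 <= d x y) /\
  (forall x, d x x = 0) /\
  (forall x y z, d x z <= d x y + d y z).

Definition separated (X : Type) (d : X -> X -> ExtR) : Prop :=
  forall x y, d x y = 0 -> d y x = 0 -> x = y.

(* Continuity of d : X x X -> [0,oo] w.r.t. the upper topology on [0,oo],
   whose nontrivial open sets are the ]u,oo]: preimages of ]u,oo] are open. *)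
Definition upper_continuous (X : topologicalType) (d : X -> X -> ExtR) : Prop :=
  forall u : ExtR, open [set p : X * X | u < d p.1 p.2].

Record MetCHsep := MkMetCHsep {
  mc_space : topologicalType;
  mc_dist : mc_space -> mc_space -> ExtR;
  mc_compact : compact (@setT mc_space);
  mc_hausdorff : hausdorff_space mc_space;
  mc_metric : is_metric mc_dist;
  mc_separated : separated mc_dist;
  mc_cont : upper_continuous mc_dist }.

Definition is_morphism (X Y : MetCHsep) (f : mc_space X -> mc_space Y) : Prop :=
  continuous f /\ (forall x y, @mc_dist Y (f x) (f y) <= @mc_dist X x y).

Definition is_epi (X Y : MetCHsep) (f : mc_space X -> mc_space Y) : Prop :=
  forall (Z : MetCHsep) (g h : mc_space Y -> mc_space Z),
    @is_morphism Y Z g -> @is_morphism Y Z h ->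
    (forall x, g (f x) = h (f x)) -> forall y, g y = h y.

(* Main.v *)
Require Import Defs.
From HB Require Import structures.
From mathcomp Require Import all_boot all_order all_algebra.
From mathcomp Require Import all_classical all_reals all_analysis.
From mathcomp Require Import Rstruct Rstruct_topology.
From mathcomp Require Import lra.
Set Implicit Arguments.
Unset Strict Implicit.
Unset Printing Implicit Defensive.
Import Order.TTheory GRing.Theory Num.Theory.
Import numFieldNormedType.Exports.
Local Open Scope classical_set_scope.
Local Open Scope ring_scope.
Local Notation RR := Rdefinitions.R.

Lemma ext_split (u x z : ExtR) : (0 <= x)%E -> (0 <= z)%E -> (u < x + z)%E ->
  exists a b : RR, [/\ (a%:E < x)%E, (b%:E < z)%E & (u <= (a + b)%:E)%E].
Proof.
case: u => [r| |]; last first.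
- move=> x0 z0 _; exists (-1), (-1); split.
  + by apply: lt_le_trans x0; rewrite lte_fin; lra.
  + by apply: lt_le_trans z0; rewrite lte_fin; lra.
  + exact: leNye.
- by move=> _ _; rewrite ltNge leey.
case: x => [x| |] //; case: z => [z| |] // x0 z0 h.
- move: h; rewrite -EFinD lte_fin => h.
  exists (x - (x + z - r) / 2), (z - (x + z - r) / 2); rewrite !lte_fin lee_fin.
  split; lra.
- move: x0; rewrite lee_fin => x0.
  exists (x - 1), (r - x + 1); rewrite lte_fin ltry lee_fin.
  split => //; lra.
- move: z0; rewrite lee_fin => z0.
  exists (r - z + 1), (z - 1); rewrite lte_fin ltry lee_fin.
  split => //; lra.
- exists (r + 1), (-1); rewrite !ltry lee_fin.
  split => //; lra.
Qed.

Lemma ext_dense (u v : ExtR) : (u < v)%E -> exists w : RR, (u < w%:E < v)%E.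
Proof.
case: u => [r| |]; case: v => [s| |] //=.
- rewrite lte_fin => h; exists ((r + s) / 2); rewrite !lte_fin; apply/andP; split; lra.
- move=> _; exists (r + 1); rewrite ltry lte_fin andbT; lra.
- move=> _; exists (s - 1); rewrite ltNyr lte_fin /=; lra.
- move=> _; exists 0; by rewrite ltNyr ltry.
Qed.

Section Constr.
Variable Y : MetCHsep.
Local Notation T := (mc_space Y).
Local Notation d := (@mc_dist Y).
Variable phi : T -> RR.
Hypothesis phic : continuous phi.

Lemma d_ge0 x y : (0 <= d x y)%E.
Proof. by case: (mc_metric Y). Qed.
Lemma d_refl x : d x x = 0%E.
Proof. by case: (mc_metric Y) => _ []. Qed.
Lemma d_tri x y z : (d x z <= d x y + d y z)%E.
Proof. by case: (mc_metric Y) => _ []. Qed.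

Definition K0 : set T := [set y | phi y = 0].
Definition Dd (y y' : T) : ExtR := ereal_inf [set (d y k + d k y')%E | k in K0].

Lemma Dd_ge0 y y' : (0 <= Dd y y')%E.
Proof. by apply: le_ereal_inf_tmp => _ [k _ <-]; rewrite adde_ge0 ?d_ge0. Qed.

Lemma Dd_le y y' k : K0 k -> (Dd y y' <= d y k + d k y')%E.
Proof. by move=> Kk; apply: ereal_inf_lbound; exists k. Qed.

Lemma d_le_Dd y y' : (d y y' <= Dd y y')%E.
Proof. by apply: le_ereal_inf_tmp => _ [k _ <-]; exact: d_tri. Qed.

Lemma ge0_cases (c : ExtR) : (0 <= c)%E -> c = +oo%E \/ c \is a fin_num.
Proof. by case: c => [r| |] //= _; [right|left]. Qed.

Lemma Dd_trir y y' y'' : (Dd y y'' <= Dd y y' + d y' y'')%E.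
Proof.
have [->|cf] := ge0_cases (d_ge0 y' y'').
  by rewrite addey ?leey // gt_eqF // (lt_le_trans _ (Dd_ge0 _ _)) ?ltNye.
rewrite -leeBlDr //; apply: le_ereal_inf_tmp => _ [k Kk <-]; rewrite leeBlDr //.
by apply: (le_trans (Dd_le _ _ Kk)); rewrite -addeA leeD2l // d_tri.
Qed.

Lemma Dd_tril y y' y'' : (Dd y y'' <= d y y' + Dd y' y'')%E.
Proof.
have [->|cf] := ge0_cases (d_ge0 y y').
  by rewrite addye ?leey // gt_eqF // (lt_le_trans _ (Dd_ge0 _ _)) ?ltNye.
rewrite addeC -leeBlDr //; apply: le_ereal_inf_tmp => _ [k Kk <-]; rewrite leeBlDr //.
apply: (le_trans (Dd_le _ _ Kk)).
by rewrite addeAC; apply: leeD2r; rewrite addeC; exact: d_tri.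
Qed.

Lemma Dd_tri y y' y'' : (Dd y y'' <= Dd y y' + Dd y' y'')%E.
Proof. by apply: (le_trans (Dd_trir y y' y'')); rewrite leeD2l // d_le_Dd. Qed.



Lemma K0_compact : compact K0.
Proof.
apply: (@subclosed_compact _ _ setT) => //; last exact: mc_compact.
have c0 : closed [set x : RR | x = 0] := @closed_eq RR 0.
have := @preimage_closed _ _ phi _ (fun x _ => @phic x) c0.
exact.
Qed.

Lemma sum_lsc_near (y k y' : T) (u : ExtR) : (u < d y k + d k y')%E ->
  \forall k' \near k & w \near (y, y'), (u < d w.1 k' + d k' w.2)%E.
Proof.
move=> H.
have [a [b [ha hb hu]]] := ext_split (d_ge0 _ _) (d_ge0 _ _) H.
have O1 : nbhs (y,k) [set p : T*T | a%:E < d p.1 p.2]%E.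
  by apply: open_nbhs_nbhs; split => //; exact: mc_cont.
have O2 : nbhs (k,y') [set p : T*T | b%:E < d p.1 p.2]%E.
  by apply: open_nbhs_nbhs; split => //; exact: mc_cont.
case: O1 => -[U1 V1] /= [U1y V1k] sub1.
case: O2 => -[V2 W2] /= [V2k W2y'] sub2.
exists (V1 `&` V2, U1 `*` W2) => /=.
  split; [exact: filterI | by exists (U1, W2)].
move=> [k' [a' b']] /= [[V1k' V2k'] [U1a' W2b']].
apply: le_lt_trans hu _; rewrite EFinD; apply: lteD.
  exact: (sub1 (a',k')).
exact: (sub2 (k',b')).
Qed.



Lemma Dd_lsc (y y' : T) (u : ExtR) : (u < Dd y y')%E ->
  \forall w \near (y, y'), (u < Dd w.1 w.2)%E.
Proof.
move=> H; have [r /andP[ur rD]] := ext_dense H.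
have cov : \forall w \near (y, y'),
    K0 `<=` (fun k => r%:E < d w.1 k + d k w.2)%E.
  have nc := proj1 (compact_near_coveringP K0) K0_compact.
  apply: (nc (T * T)%type (nbhs (y, y')) _ _) => k Kk.
  apply: sum_lsc_near; exact: (lt_le_trans rD (Dd_le _ _ Kk)).
apply: filterS cov => w Hw; apply: (lt_le_trans ur).
by apply: le_ereal_inf_tmp => _ [k Kk <-]; exact/ltW/Hw.
Qed.

Lemma Dd_pos (y : T) : ~ K0 y -> (0 < Dd y y)%E.
Proof.
move=> nK.
have cov : \forall r \near (0:RR)^'+,
    K0 `<=` (fun k => r%:E < d y k + d k y)%E.
  have nc := proj1 (compact_near_coveringP K0) K0_compact.
  apply: (nc RR (0:RR)^'+ _ _) => k Kk.
  have pos : (0 < d y k + d k y)%E.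
    rewrite lt_def adde_ge0 ?d_ge0 // andbT; apply/negP => /eqP.
    move/eqP; rewrite padde_eq0 ?d_ge0 // => /andP[/eqP h1 /eqP h2].
    by apply: nK; rewrite (mc_separated h1 h2).
  have [e /andP[e0 eD]] := ext_dense pos.
  have [[A B] /= [Ak By] sub] := sum_lsc_near eD.
  exists (A, [set r : RR | r < e]) => /=.
    by split => //; apply: nbhs_right_lt; rewrite -lte_fin.
  move=> [k' r] /= [Ak' re]; apply: lt_trans (sub (k', (y,y)) _).
    by rewrite lte_fin.
  by split => //; exact: nbhs_singleton.
have [r [Kr r0]] := filter_ex (filterI cov (nbhs_right_gt 0)).
apply: (@lt_le_trans _ _ r%:E); first by rewrite lte_fin.
by apply: le_ereal_inf_tmp => _ [k Kk <-]; exact/ltW/Kr.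
Qed.



Definition Aset : set (T * RR) := [set p | p.2 = 0 \/ p.2 = phi p.1].
Definition Zt : topologicalType := set_type Aset.

Lemma val_cont : continuous (fun z : Zt => (val z : T * RR)).
Proof. exact: initial_continuous. Qed.

Lemma cont_to_Z (W : topologicalType) (g : W -> Zt) :
  continuous (fun w => (val (g w) : T * RR)) -> continuous g.
Proof.
move=> gc; apply/continuousP => U [V oV <-].
have := (proj1 (continuousP _) gc) V oV.
exact.
Qed.



Lemma pull_haus (W S : topologicalType) (j : W -> S) (p q : W) :
  continuous j -> hausdorff_space S -> j p != j q ->
  exists2 AB : set W * set W, (p \in AB.1 /\ q \in AB.2) &
    [/\ open AB.1, open AB.2 & AB.1 `&` AB.2 == set0].
Proof.
move=> jc; rewrite open_hausdorff => /[apply] -[[A B] /= [pA qB] [oA oB AB0]].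
exists (j @^-1` A, j @^-1` B) => /=.
  by split; rewrite in_setE /= -in_setE.
split.
- exact: (proj1 (continuousP j) jc A oA).
- exact: (proj1 (continuousP j) jc B oB).
- by apply/eqP; rewrite -preimage_setI (eqP AB0) preimage_set0.
Qed.

Lemma fst_cont (A B : topologicalType) : continuous (@fst A B).
Proof. by move=> [a b]; exact: cvg_fst. Qed.
Lemma snd_cont (A B : topologicalType) : continuous (@snd A B).
Proof. by move=> [a b]; exact: cvg_snd. Qed.

Lemma Z_haus : hausdorff_space Zt.
Proof.
rewrite open_hausdorff => p q pq.
have vpq : val p != val q by apply: contra_neq pq; exact: val_inj.
have [ne|ne] : (val p).1 != (val q).1 \/ (val p).2 != (val q).2.
  move: vpq; case: (val p) => a b; case: (val q) => a' b'.
  by rewrite xpair_eqE negb_and => /orP.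
- apply: (pull_haus (j := fun z : Zt => (val z).1)) => //.
    by move=> z; exact: (continuous_comp (@val_cont z) (@fst_cont _ _ _)).
  exact: mc_hausdorff.
- apply: (pull_haus (j := fun z : Zt => (val z).2)) => //.
    by move=> z; exact: (continuous_comp (@val_cont z) (@snd_cont _ _ _)).
  exact: Rhausdorff.
Qed.

Definition gz (y : T) : Zt := exist _ (y, 0 : RR) (@mem_set _ Aset (y, 0) (or_introl erefl)).
Definition hz (y : T) : Zt := exist _ (y, phi y) (@mem_set _ Aset (y, phi y) (or_intror erefl)).

Lemma gz_cont : continuous gz.
Proof.
apply: cont_to_Z => y /=.
exact: (@cvg_pair _ _ _ (nbhs y) (nbhs y) (nbhs (0:RR)) _ _ _ id (fun _ => 0) cvg_id (cvg_cst _)).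
Qed.

Lemma hz_cont : continuous hz.
Proof.
apply: cont_to_Z => y /=.
exact: (@cvg_pair _ _ _ (nbhs y) (nbhs y) (nbhs (phi y)) _ _ _ id phi cvg_id (@phic y)).
Qed.

Lemma Z_compact : compact [set: Zt].
Proof.
have -> : [set: Zt] = gz @` setT `|` hz @` setT.
  apply/seteqP; split => // z _.
  have := set_valP z; rewrite /Aset /= => -[] e; [left|right]; exists (val z).1 => //;
    by apply: val_inj => /=; rewrite -e; case: (val z).
apply: compactU; apply: continuous_compact; try exact: mc_compact.
  exact/continuous_subspaceT/gz_cont.
exact/continuous_subspaceT/hz_cont.
Qed.



Definition same (p q : T * RR) : Prop :=
  (p.2 = 0 /\ q.2 = 0) \/ (p.2 = phi p.1 /\ q.2 = phi q.1).
Definition Ed (p q : T * RR) : ExtR := if `[< same p q >] then d p.1 q.1 else +oo%E.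
Definition dZ (p q : Zt) : ExtR :=
  Order.min (Ed (val p) (val q)) (Dd (val p).1 (val q).1).

Lemma Ed_same p q : same p q -> Ed p q = d p.1 q.1.
Proof. by move=> h; rewrite /Ed asboolT. Qed.
Lemma Ed_nsame p q : ~ same p q -> Ed p q = +oo%E.
Proof. by move=> h; rewrite /Ed asboolF. Qed.

Lemma d_le_Ed p q : (d p.1 q.1 <= Ed p q)%E.
Proof. by rewrite /Ed; case: asboolP => // _; exact: leey. Qed.

Lemma Ed_ge0 p q : (0 <= Ed p q)%E.
Proof. exact: le_trans (d_ge0 _ _) (d_le_Ed p q). Qed.
Lemma ge0_nNy (x : ExtR) : (0 <= x)%E -> x != -oo%E.
Proof. by case: x. Qed.

Lemma dZ_le_Ed p q : (dZ p q <= Ed (val p) (val q))%E.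
Proof. by rewrite /dZ ge_min lexx. Qed.
Lemma dZ_le_Dd p q : (dZ p q <= Dd (val p).1 (val q).1)%E.
Proof. by rewrite /dZ ge_min lexx orbT. Qed.
Lemma d_le_dZ p q : (d (val p).1 (val q).1 <= dZ p q)%E.
Proof. by rewrite /dZ le_min d_le_Ed d_le_Dd. Qed.

Lemma same_refl (z : Zt) : same (val z) (val z).
Proof. by have := set_valP z; rewrite /Aset /= => -[] e; [left|right]. Qed.

Lemma dZ_ge0 p q : (0 <= dZ p q)%E.
Proof. exact: le_trans (d_ge0 _ _) (d_le_dZ p q). Qed.

Lemma dZ_refl p : dZ p p = 0%E.
Proof.
rewrite /dZ Ed_same; last exact: same_refl.
by rewrite d_refl; apply/min_idPl; exact: Dd_ge0.
Qed.

Lemma same_K0 p q r : same p q -> same q r -> ~ same p r -> K0 q.1.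
Proof.
rewrite /same /K0 /=.
move=> [[h1 h2]|[h1 h2]] [[h3 h4]|[h3 h4]] hn.
- by exfalso; apply: hn; left.
- by rewrite -h3.
- by rewrite -h2.
- by exfalso; apply: hn; right.
Qed.

Lemma dZ_tri p q r : (dZ p r <= dZ p q + dZ q r)%E.
Proof.
have key : forall X V, (X = Ed (val p) (val q) \/ X = Dd (val p).1 (val q).1) ->
    (V = Ed (val q) (val r) \/ V = Dd (val q).1 (val r).1) ->
    (dZ p r <= X + V)%E.
  move=> X V [->|->] [->|->].
  - have [s1|ns1] := pselect (same (val p) (val q)); last first.
      by rewrite (Ed_nsame ns1) addye ?leey // ge0_nNy // Ed_ge0.
    have [s2|ns2] := pselect (same (val q) (val r)); last first.
      by rewrite (Ed_nsame ns2) addey ?leey // ge0_nNy // Ed_ge0.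
    rewrite (Ed_same s1) (Ed_same s2).
    have [s3|ns3] := pselect (same (val p) (val r)).
      by apply: le_trans (dZ_le_Ed _ _) _; rewrite (Ed_same s3) d_tri.
    apply: le_trans (dZ_le_Dd _ _) _; apply: Dd_le; exact: (same_K0 s1 s2 ns3).
  - have [s1|ns1] := pselect (same (val p) (val q)); last first.
      by rewrite (Ed_nsame ns1) addye ?leey // ge0_nNy // Dd_ge0.
    by rewrite (Ed_same s1); apply: le_trans (dZ_le_Dd _ _) _; exact: Dd_tril.
  - have [s2|ns2] := pselect (same (val q) (val r)); last first.
      by rewrite (Ed_nsame ns2) addey ?leey // ge0_nNy // Dd_ge0.
    by rewrite (Ed_same s2); apply: le_trans (dZ_le_Dd _ _) _; exact: Dd_trir.
  - by apply: le_trans (dZ_le_Dd _ _) _; exact: Dd_tri.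
apply: (key (dZ p q) (dZ q r)); rewrite /dZ /Order.min; case: ifP => _; auto.
Qed.



Lemma dZ_sep p q : dZ p q = 0%E -> dZ q p = 0%E -> p = q.
Proof.
move=> h1 h2.
have e1 : d (val p).1 (val q).1 = 0%E.
  by apply: le_anti; rewrite d_ge0 andbT; apply: (le_trans (d_le_dZ p q)); rewrite h1.
have e2 : d (val q).1 (val p).1 = 0%E.
  by apply: le_anti; rewrite d_ge0 andbT; apply: (le_trans (d_le_dZ q p)); rewrite h2.
have ey : (val p).1 = (val q).1 := mc_separated e1 e2.
have hs : (val p).2 = (val q).2.
  have [Ky|nKy] := pselect (K0 (val p).1).
    have := set_valP p; have := set_valP q; rewrite /Aset /= -ey.
    by move: Ky; rewrite /K0 /= => Ky [->|->] [->|->]; rewrite ?Ky.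
  have pos := Dd_pos nKy.
  have sm : same (val p) (val q).
    apply: contrapT => ns; move: h1; rewrite /dZ Ed_nsame // (min_idPr (leey _)) -ey => h.
    by rewrite h ltxx in pos.
  by case: sm => [[-> ->]|[-> ->]] //; rewrite ey.
apply: val_inj; move: ey hs; case: (val p) => a b; case: (val q) => a' b' /= -> ->.
by [].
Qed.

Lemma cont_comp (A B C : topologicalType) (f : A -> B) (g : B -> C) :
  continuous f -> continuous g -> continuous (fun x => g (f x)).
Proof. by move=> fc gc x; exact: continuous_comp (@fc x) (@gc (f x)). Qed.

Lemma cont_pair (A B C : topologicalType) (f : A -> B) (g : A -> C) :
  continuous f -> continuous g -> continuous (fun x => (f x, g x)).
Proof.
move=> fc gc x.
exact: (@cvg_pair _ _ _ (nbhs x) (nbhs (f x)) (nbhs (g x)) _ _ _ f g (@fc x) (@gc x)).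
Qed.

Lemma closed_eqfun (W : topologicalType) (f g : W -> RR) :
  continuous f -> continuous g -> closed [set w | f w = g w].
Proof.
move=> fc gc.
have -> : [set w | f w = g w] = (fun w => f w - g w) @^-1` [set x : RR | x = 0].
  apply/seteqP; split => w /= h; first by rewrite h subrr.
  by apply/eqP; rewrite -subr_eq0 h.
have c0 : closed [set x : RR | x = 0] := @closed_eq RR 0.
apply: preimage_closed c0 => w _; have := (@continuousB RR RR^o _ f g w (@fc w) (@gc w)).
exact.
Qed.

Local Notation PP := ((T * RR) * (T * RR))%type.

Lemma c11 : continuous (fun w : PP => w.1.1).
Proof. exact: cont_comp (@fst_cont _ _) (@fst_cont _ _). Qed.
Lemma c12 : continuous (fun w : PP => w.1.2).
Proof. exact: cont_comp (@fst_cont _ _) (@snd_cont _ _). Qed.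
Lemma c21 : continuous (fun w : PP => w.2.1).
Proof. exact: cont_comp (@snd_cont _ _) (@fst_cont _ _). Qed.
Lemma c22 : continuous (fun w : PP => w.2.2).
Proof. exact: cont_comp (@snd_cont _ _) (@snd_cont _ _). Qed.

Lemma SAME_closed : closed [set w : PP | same w.1 w.2].
Proof.
apply: closedU; apply: closedI.
- exact: (@closed_eqfun _ (fun w : PP => w.1.2) (fun _ => 0) c12 (@cst_continuous PP RR 0)).
- exact: (@closed_eqfun _ (fun w : PP => w.2.2) (fun _ => 0) c22 (@cst_continuous PP RR 0)).
- exact: (@closed_eqfun _ (fun w : PP => w.1.2) (fun w : PP => phi w.1.1) c12 (cont_comp c11 phic)).
- exact: (@closed_eqfun _ (fun w : PP => w.2.2) (fun w : PP => phi w.2.1) c22 (cont_comp c21 phic)).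
Qed.

Lemma dZ_cont : upper_continuous dZ.
Proof.
move=> u.
have [->|uf] : u = +oo%E \/ (u < +oo)%E by case: u => [r| |]; [right; exact: ltry|left|right].
  have -> : [set p : Zt * Zt | +oo < dZ p.1 p.2]%E = set0.
    by apply/seteqP; split => p //=; rewrite ltNge leey.
  exact: open0.
pose sig := fun pq : Zt * Zt => (val pq.1 : T * RR, val pq.2 : T * RR).
pose pi := fun pq : Zt * Zt => ((val pq.1).1, (val pq.2).1).
have sigc : continuous sig.
  by apply: cont_pair; apply: cont_comp val_cont; [exact: fst_cont|exact: snd_cont].
have pic : continuous pi.
  apply: cont_pair; apply: cont_comp (@fst_cont _ _); apply: cont_comp val_cont;
    [exact: fst_cont|exact: snd_cont].
have -> : [set p : Zt * Zt | u < dZ p.1 p.2]%E =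
    sig @^-1` (~` [set w : PP | same w.1 w.2] `|` [set w : PP | u < d w.1.1 w.2.1]%E)
    `&` pi @^-1` [set w : T * T | u < Dd w.1 w.2]%E.
  apply/seteqP; split => -[p q] /=; rewrite /dZ lt_min.
    move=> /andP[h1 h2]; split => //; move: h1; rewrite /Ed; case: asboolP => s h.
      by right.
    by left.
  move=> [[ns|hd] h2]; apply/andP; split => //; rewrite /Ed; case: asboolP => //.
apply: openI.
  apply: (proj1 (continuousP _) sigc); apply: openU.
    exact: closed_openC SAME_closed.
  have tc : continuous (fun w : PP => (w.1.1, w.2.1)) by exact: cont_pair c11 c21.
  have := proj1 (continuousP _) tc [set p : T * T | u < d p.1 p.2]%E (@mc_cont Y u).
  exact.
apply: (proj1 (continuousP _) pic); rewrite openE => -[a b] /= h.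
exact: Dd_lsc h.
Qed.

End Constr.

Definition ZZ (Y : MetCHsep) (phi : mc_space Y -> RR) (phic : continuous phi) : MetCHsep :=
  @MkMetCHsep (Zt phi) (@dZ Y phi) (Z_compact phic) (@Z_haus Y phi)
    (conj (@dZ_ge0 Y phi) (conj (@dZ_refl Y phi) (@dZ_tri Y phi)))
    (@dZ_sep Y phi phic) (dZ_cont phic).

Theorem proposition4p6 (X Y : MetCHsep) (f : mc_space X -> mc_space Y) :
  @is_morphism X Y f -> (@is_epi X Y f <-> forall y, exists x, f x = y).
Proof.
move=> [fc fne]; split; last first.
  by move=> sf Z g h _ _ e y; have [x <-] := sf y; exact: e.
move=> epi; apply: contrapT => /existsNP [y0 ny0].
have ny : forall x, f x <> y0 by move=> x e; apply: ny0; exists x.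
pose K := f @` [set: mc_space X].
have Kc : compact K.
  by apply: continuous_compact; [exact: continuous_subspaceT | exact: mc_compact].
have Kcl : closed K := compact_closed (@mc_hausdorff Y) Kc.
have nrm : normal_space (mc_space Y) := compact_normal (@mc_hausdorff Y) (@mc_compact Y).
have cl1 : closed [set y0].
  exact: (accessible_closed_set1 (hausdorff_accessible (@mc_hausdorff Y))).
have KI : K `&` [set y0] = set0.
  by rewrite -subset0 => y [[x _ <-]] /= e; exact: ny x e.
have sep := (proj1 (@normal_separatorP RR _) nrm) K [set y0] Kcl cl1 KI.
have [phi [phic _ phiK phiy0]] := proj1 (@uniform_separatorP _ RR K [set y0]) sep.
have phi0 : forall x, phi (f x) = 0.
  by move=> x; apply: phiK; exists (f x) => //; exists x.
have phi1 : phi y0 = 1 by apply: phiy0; exists y0.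
have := @epi (ZZ phic) (@gz Y phi) (@hz Y phi).
have gm : @is_morphism Y (ZZ phic) (@gz Y phi).
  split; first exact: gz_cont.
  move=> a b; apply: le_trans (dZ_le_Ed _ _) _; rewrite Ed_same //; by left.
have hm : @is_morphism Y (ZZ phic) (@hz Y phi).
  split; first exact: hz_cont.
  move=> a b; apply: le_trans (dZ_le_Ed _ _) _; rewrite Ed_same //; by right.
move=> /(_ gm hm) H.
have agree : forall x, @gz Y phi (f x) = @hz Y phi (f x).
  by move=> x; apply: val_inj => /=; rewrite phi0.
have e := H agree y0.
have := congr1 (fun z : Zt phi => (val z).2) e => /=.
by rewrite phi1 => /esym /eqP; rewrite oner_eq0.
Qed.
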